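(* Let $\varepsilon\in(0,\frac12]$, let $G$ be an $\varepsilon$-Ramsey-balanced graph, and let $H$ be obtained from $G$ by deleting one vertex. Then $r(G)\leq \frac{4}{\varepsilon}\cdot r(H)$.
   Context: For a graph $F$, the Ramsey number $r(F)$ is the minimum $N$ such that every two-coloring of the edges of $K_N$ contains a monochromatic copy of $F$. The edge density of an $N$-vertex graph is its number of edges divided by $\binom N2$. For $\varepsilon\in(0,\frac12]$, a two-coloring of $E(K_N)$ is $\varepsilon$-balanced if both color classes have edge density at least $\varepsilon$. A Ramsey coloring for $G$ is a two-coloring of $E(K_N)$ with $N=r(G)-1$ containing no monochromatic copy of $G$. The graph $G$ is $\varepsilon$-Ramsey-balanced if there exists a Ramsey coloring for $G$ which is $\varepsilon$-balanced. *)

(* Defs.v *)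
From mathcomp Require Import all_boot all_order all_algebra.
Set Implicit Arguments. Unset Strict Implicit. Unset Printing Implicit Defensive.
Import Order.TTheory GRing.Theory Num.Theory.

(* A two-coloring of E(K_N) is a map [c] from subsets of 'I_N to bool;
   the color of the edge {i,j} is [c [set i; j]] (values on sets of size
   other than 2 are irrelevant). *)
Definition coloring (N : nat) := {set 'I_N} -> bool.

Definition simple_graph (V : finType) (e : rel V) :=
  symmetric e /\ irreflexive e.

Definition has_mono_copy (V : finType) (e : rel V) (N : nat) (c : coloring N) :=
  exists (b : bool) (f : V -> 'I_N),
    injective f /\ forall x y : V, e x y -> c [set f x; f y] = b.

Definition ramsey_arrow (V : finType) (e : rel V) (N : nat) :=
  forall c : coloring N, has_mono_copy e c.

Definition is_ramsey_number (V : finType) (e : rel V) (r : nat) :=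
  ramsey_arrow e r /\ forall N, ramsey_arrow e N -> r <= N.

Definition color_class_size (N : nat) (c : coloring N) (b : bool) : nat :=
  #|[set s : {set 'I_N} | (#|s| == 2) && (c s == b)]|.

Definition edge_density (R : realFieldType) (N : nat) (c : coloring N) (b : bool) : R :=
  ((color_class_size c b)%:R / ('C(N, 2))%:R)%R.

Definition eps_balanced (R : realFieldType) (eps : R) (N : nat) (c : coloring N) :=
  (eps <= edge_density R c true)%R /\ (eps <= edge_density R c false)%R.

Definition ramsey_balanced (R : realFieldType) (eps : R) (V : finType) (e : rel V) :=
  exists r, is_ramsey_number e r /\
    exists c : coloring r.-1, ~ has_mono_copy e c /\ eps_balanced eps c.

Definition del_vertex (V : finType) (e : rel V) (v : V) : rel {x : V | x != v} :=
  fun x y => e (val x) (val y).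
Arguments del_vertex {V} e v.

(* Main.v *)
Require Import Defs.
From mathcomp Require Import all_boot all_order all_algebra zify ring lra.
Set Implicit Arguments. Unset Strict Implicit. Unset Printing Implicit Defensive.
Import Order.TTheory GRing.Theory Num.Theory.

Lemma card_sumb (T : finType) (A : {pred T}) : #|A| = \sum_i ((i \in A) : nat).
Proof.
rewrite -sum1_card big_mkcond /=; apply: eq_bigr => i _; by case: (i \in A).
Qed.

Definition nbr N (c : coloring N) (b : bool) (x : 'I_N) : {set 'I_N} :=
  [set u | (u != x) && (c [set x; u] == b)].

Lemma nbr_sym N (c : coloring N) b x z : (z \in nbr c b x) = (x \in nbr c b z).
Proof. by rewrite !inE eq_sym setUC. Qed.

Lemma double_count N (c : coloring N) b (A : {set 'I_N}) :
  \sum_(x in A) #|nbr c b x| = \sum_z #|A :&: nbr c b z|.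
Proof.
under eq_bigr => x _ do rewrite card_sumb.
rewrite exchange_big /=; apply: eq_bigr => z _.
rewrite card_sumb big_mkcond /=; apply: eq_bigr => x _.
by rewrite in_setI nbr_sym; case: (x \in A).
Qed.

Lemma deg_split N (c : coloring N) b x : #|nbr c b x| + #|nbr c (~~ b) x| = N.-1.
Proof.
have := cardsC1 x; rewrite card_ord => <-.
rewrite -(cardsID [set u | c [set x; u] == b] [set~ x]).
rewrite /nbr; congr (_ + _); apply: eq_card => u; rewrite !inE; case: (u != x) => //=.
  by case: (c _); case: b.
by rewrite andbF.
Qed.

Lemma handshake N (c : coloring N) b :
  \sum_w #|nbr c b w| = 2 * color_class_size c b.
Proof.
rewrite /color_class_size.
set E := [set s : {set 'I_N} | (#|s| == 2) && (c s == b)].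
have -> : 2 * #|E| = \sum_(s in E) #|s|.
  rewrite -sum1_card big_distrr /=; apply: eq_bigr => s.
  by rewrite inE => /andP[/eqP -> _]; rewrite muln1.
under [RHS]eq_bigr => s _ do rewrite card_sumb.
rewrite exchange_big /=; apply: eq_bigr => w _.
have -> : \sum_(s in E) ((w \in s) : nat) = #|[set s in E | w \in s]|.
  rewrite card_sumb big_mkcond /=; apply: eq_bigr => s _.
  by rewrite [in RHS]inE; case: (s \in E).
rewrite -(@card_in_imset _ _ (fun u => [set w; u])).
  apply: eq_card => s; rewrite [in RHS]inE /E [in RHS]inE; apply/imsetP/idP.
    case=> u; rewrite inE => /andP[uw /eqP cb] ->.
    rewrite cards2 (eq_sym w u) uw cb !eqxx /=; exact: set21.
  case/andP=> /andP[/cards2P[a [a' [aa' ->]]] cb] win.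
  move: win; rewrite !inE => /orP[] /eqP ->.
    exists a'; last by [].
    rewrite inE eq_sym aa' /=. apply/eqP. exact/eqP.
  exists a; last exact: setUC.
  rewrite inE aa' setUC /=; exact: cb.
move=> u u'; rewrite !inE => /andP[uw _] /andP[u'w _] eq.
have : u \in [set w; u'] by rewrite -eq; exact: set22.
rewrite !inE (negbTE uw) /=; exact: eqP.
Qed.

Lemma ext (V : finType) (e : rel V) v N (c : coloring N) b0 (w : 'I_N)
  (h : {x : V | x != v} -> 'I_N) :
  simple_graph e -> injective h -> (forall x, h x != w) ->
  (forall x x', e (val x) (val x') -> c [set h x; h x'] = b0) ->
  (forall x, c [set w; h x] = b0) -> has_mono_copy e c.
Proof.
move=> [esym eirr] hinj hw hE hW.
exists b0, (fun u => if insub u is Some x then h x else w); split.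
- move=> u u'; case: insubP => [x xv xu|uv]; case: insubP => [x' x'v x'u|u'v] /=.
  + by move/hinj=> exx'; rewrite -xu -x'u exx'.
  + by move=> hxw; move: (hw x); rewrite hxw eqxx.
  + by move=> whx; move: (hw x'); rewrite -whx eqxx.
  + by move: uv u'v; rewrite !negbK => /eqP -> /eqP ->.
- move=> u u'; case: insubP => [x xv xu|uv]; case: insubP => [x' x'v x'u|u'v] /= euu'.
  + by apply: hE; rewrite xu x'u.
  + by rewrite setUC.
  + by [].
  + by move: uv u'v euu'; rewrite !negbK => /eqP -> /eqP ->; rewrite eirr.
Qed.

Lemma key (V : finType) (e : rel V) v n N (c : coloring N) b (y z : 'I_N) :
  simple_graph e -> ramsey_arrow (del_vertex e v) n -> ~ has_mono_copy e c ->
  #|nbr c b y :&: nbr c (~~b) z| < n.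
Proof.
move=> sg RA nomono; rewrite ltnNge; apply/negP => Hle.
set S := nbr c b y :&: nbr c (~~b) z in Hle.
pose g (i : 'I_n) : 'I_N := enum_val (A := S) (widen_ord Hle i).
have ginj : injective g.
  by move=> i j /enum_val_inj /(congr1 val) /= ij; exact: val_inj.
have gS i : g i \in S := enum_valP _.
have [b' [f [finj fE]]] := RA (fun s => c (g @: s)).
have fE' : forall x x', e (val x) (val x') -> c [set g (f x); g (f x')] = b'.
  by move=> x x' /fE; rewrite imsetU1 imset_set1.
apply: nomono; case Eb: (b' == b).
- apply: (@ext _ e v _ c b y (fun x => g (f x))) => //.
  + by move=> x1 x2 /ginj /finj.
  + by move=> x; have := gS (f x); rewrite !inE => /andP[/andP[]].
  + by move=> x x2 /fE'; move/eqP: Eb => ->.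
  + by move=> x; have := gS (f x); rewrite !inE => /andP[/andP[_ /eqP]].
- have Eb' : b' = ~~ b by move: Eb; destruct b', b.
  apply: (@ext _ e v _ c (~~b) z (fun x => g (f x))) => //.
  + by move=> x1 x2 /ginj /finj.
  + by move=> x; have := gS (f x); rewrite !inE => /andP[_ /andP[]].
  + by move=> x x2 /fE' ->.
  + by move=> x; have := gS (f x); rewrite !inE => /andP[_ /andP[_ /eqP]].
Qed.

Lemma spread N (c : coloring N) b (y z : 'I_N) :
  #|nbr c b y| + #|nbr c (~~b) z| <= N + #|nbr c b y :&: nbr c (~~b) z|.
Proof.
rewrite -cardsUI leq_add2r; have := max_card (mem (nbr c b y :|: nbr c (~~b) z)).
by rewrite card_ord.
Qed.

Lemma sumbound N (c : coloring N) b (y : 'I_N) n :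
  (forall z, #|nbr c b y :&: nbr c (~~b) z| < n) ->
  \sum_(x in nbr c b y) #|nbr c (~~b) x| <= N.-1 * n.-1.
Proof.
move=> H; rewrite double_count (bigD1 y) //=.
have -> : nbr c b y :&: nbr c (~~b) y = set0.
  apply/setP => x; rewrite !inE; case: (x != y) => //=; by case: (c _); case: (b).
rewrite cards0 add0n.
have <- : #|[pred z | z != y]| = N.-1 by rewrite cardC1 card_ord.
rewrite -sum_nat_const; apply: leq_sum => z _.
by have := H z; case: n {H}.
Qed.

Lemma bin2_dbl n : ('C(n,2) * 2 = n * n.-1)%N.
Proof.
elim: n => [|n IH] //; rewrite binS bin1 mulnDl IH.
case: n {IH} => // m /=; lia.
Qed.

Local Open Scope ring_scope.

Lemma final (R : realFieldType) (eps : R) N (c : coloring N) b (y0 : 'I_N) n :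
  0 < eps -> eps <= 2^-1 -> (1 < N)%N -> (0 < n)%N ->
  (forall y z, #|nbr c b y :&: nbr c (~~b) z| < n)%N ->
  (N.-1 <= 2 * #|nbr c b y0|)%N ->
  eps <= edge_density R c (~~b) ->
  (N.+1)%:R <= 4 / eps * n%:R.
Proof.
move=> e0 e2 N1 n0 Hk HD Hd.
case: (@arg_maxnP _ y0 xpredT (fun w => #|nbr c (~~b) w|)) => // w _ Hw.
set dw := #|nbr c (~~b) w|.
have HS : (2 * color_class_size c (~~b) <= N * dw)%N.
  rewrite -handshake.
  have -> : (N * dw = \sum_(x : 'I_N) dw)%N by rewrite sum_nat_const card_ord.
  by apply: leq_sum => x _; apply: Hw.
have Hc : (('C(N, 2))%:R : R) * 2 = N%:R * (N.-1)%:R.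
  by rewrite -[RHS]natrM -bin2_dbl natrM.
have Cpos : (0 : R) < ('C(N, 2))%:R.
  rewrite ltr0n bin2; move: N1; case: N {c y0 w Hk HD Hd Hw HS Hc dw} => // [[]] // m _.
  rewrite /=; lia.
move: Hd; rewrite /edge_density ler_pdivlMr // => Hd.
have HS' : (2 * (color_class_size c (~~ b))%:R : R) <= N%:R * dw%:R.
  have := HS; rewrite -(ler_nat R) !natrM; exact.
have Hdw : eps * (N.-1)%:R <= dw%:R.
  have Np : (0 : R) < N%:R by rewrite ltr0n; lia.
  rewrite -(ler_pM2l Np).
  apply: le_trans HS'.
  have : eps * ('C(N, 2))%:R * 2 <= (color_class_size c (~~ b))%:R * 2 by lra.
  rewrite -mulrA Hc; lra.
have Hsp : forall x, (dw <= #|nbr c (~~b) x| + n)%N.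
  move=> x; have := spread c b x w; have := Hk x w; have := deg_split c b x.
  rewrite -/dw; lia.
set A := nbr c b y0.
have Hsum := sumbound (Hk y0).
have HB : (#|A| * dw + N.-1 <= N.-1 * n + #|A| * n)%N.
  have : (\sum_(x in A) dw <= \sum_(x in A) (#|nbr c (~~b) x| + n))%N.
    by apply: leq_sum => x _; apply: Hsp.
  rewrite big_split /= !sum_nat_const.
  move: Hsum; rewrite -/A.
  have : (N.-1 * n.-1 + N.-1 = N.-1 * n)%N by case: n n0 {Hk Hsp} => // k _; rewrite mulnS /=; lia.
  set S := \sum_(i in A) _.
  set P1 := (N.-1 * n.-1)%N; set P2 := (N.-1 * n)%N; set P3 := (#|A| * dw)%N; set P4 := (#|A| * n)%N.
  lia.
have HB' : (#|A|%:R * dw%:R + (N.-1)%:R : R) <= (N.-1)%:R * n%:R + #|A|%:R * n%:R.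
  by rewrite -!natrM -!natrD ler_nat.
have HD' : ((N.-1)%:R : R) <= 2 * #|A|%:R.
  by rewrite -[2]/(2%:R) -natrM ler_nat.
have HM : (1 : R) <= (N.-1)%:R by rewrite ler1n; lia.
have Hn : (1 : R) <= n%:R by rewrite ler1n.
have HN : (N.+1)%:R = (N.-1)%:R + 2 :> R.
  by rewrite -[2]/(2%:R) -natrD; congr (_%:R); lia.
rewrite HN mulrAC ler_pdivlMr //.
set M := (N.-1)%:R : R in HB' HD' HM Hdw HN *.
set D := #|A|%:R : R in HB' HD'.
set m := n%:R : R in HB' Hn *.
set d := dw%:R : R in HB' Hdw.
have D0 : 0 < D by lra.
have : D * (eps * M) <= D * (3 * m - 2).
  have : D * (eps * M) <= D * d by rewrite ler_pM2l.
  nra.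
rewrite ler_pM2l // => H3.
nra.
Qed.
Local Open Scope ring_scope.

Theorem proposition1p4 (R : realFieldType) (eps : R) (V : finType) (e : rel V)
    (v : V) (rG rH : nat) :
  0 < eps -> eps <= 2^-1 ->
  simple_graph e ->
  ramsey_balanced eps e ->
  is_ramsey_number e rG ->
  is_ramsey_number (del_vertex e v) rH ->
  (rG%:R : R) <= 4 / eps * rH%:R.
Proof.
move=> e0 e2 sg [r [[RAr minr] [c [nomono [balT balF]]]]] [RAG minG] [RAH minH].
have -> : rG = r by apply/eqP; rewrite eqn_leq minG // minr.
have N1 : (1 < r.-1)%N.
  rewrite ltnNge; apply/negP => HN.
  move: balT; rewrite /edge_density bin_small; last by lia.
  by rewrite invr0 mulr0 => /(lt_le_trans e0); rewrite ltxx.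
have Er : r = (r.-1).+1 by lia.
rewrite {1}Er.
have Hk : forall b (y z : 'I_r.-1), (#|nbr c b y :&: nbr c (~~b) z| < rH)%N.
  by move=> b y z; apply: key sg RAH nomono.
pose y0 : 'I_r.-1 := Ordinal (ltnW N1).
have n0 : (0 < rH)%N by have := Hk true y0 y0; lia.
have := deg_split c true y0.
case: (leqP (r.-1).-1 (2 * #|nbr c true y0|)) => H Hs.
- exact: (final (b := true) (y0 := y0) e0 e2 N1 n0 (Hk true) H balF).
- apply: (final (b := false) (y0 := y0) e0 e2 N1 n0 (Hk false) _ balT).
  move: Hs H; set a := #|_|; set d := #|_|. lia.
Qed.
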